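(* Let $S$ be a rectangular domain and $\bar\eta$ a flow field on $\mathbb{E}(\bar S)$. Let $E_{\mathrm{low}}$ be the set of edges $\langle y,y'\rangle$ with $y\in S$, $y'\in\partial\bar S$ and $x(y')=x(y)-1$, and let $E_{\mathrm{up}}$ be the set of such edges with $x(y')=x(y)+1$. Then $$\sum_{e\in E_{\mathrm{low}}}\eta(e)=\sum_{e\in E_{\mathrm{up}}}\eta(e)=\sum_{\ell\in C(S)}w_\eta(\ell).$$
   Context: Lattice and edges. $\tilde{\mathbb{Z}}^2=\{(t,x)\in\mathbb{Z}^2:t+x\text{ even}\}$; edges join points at distance $\sqrt2$; for a point $y=(t,x)$ write $x(y)=x$. Also: - $e^\nearrow_y=\langle(t,x),(t+1,x+1)\rangle$, - $e^\searrow_y=\langle(t,x),(t+1,x-1)\rangle$, - $e^\swarrow_y=\langle(t-1,x-1),(t,x)\rangle$, - $e^\nwarrow_y=\langle(t-1,x+1),(t,x)\rangle$. Domains. A rectangular domain is a nonempty set $S=\{(t,x)\in\tilde{\mathbb{Z}}^2: a\le t+x\le b,\ c\le t-x\le d\}$ with even integers $a\le b$, $c\le d$. $\bar S$ is $S$ together with all points joined by an edge to a point of $S$; $\partial\bar S=\bar S\setminus S$; $\mathbb{E}(\bar S)$ is the set of edges with at least one endpoint in $S$. Flow field. A flow field is $\eta(e)\ge0$, $e\in\mathbb{E}(\bar S)$, with $\eta(e^\nwarrow_y)+\eta(e^\nearrow_y)=\eta(e^\swarrow_y)+\eta(e^\searrow_y)$ for all $y\in S$; $\xi_y=\eta(e^\nearrow_y)\wedge\eta(e^\searrow_y)$.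 Association. For $y\in S$, lower edge $f_1\in\{e^\swarrow_y,e^\searrow_y\}$ with $p_1\in(0,\eta(f_1)]$, and upper edge $f_2\in\{e^\nwarrow_y,e^\nearrow_y\}$ with $p_2\in(0,\eta(f_2)]$, write $(f_1,p_1)\sim_y(f_2,p_2)$ exactly when: - Case 1: $f_1=e^\swarrow_y$, $f_2=e^\nwarrow_y$, $p_1\le\eta(f_1)\wedge\eta(f_2)$, $p_2=p_1$; - Case 2: $f_1=e^\searrow_y$, $f_2=e^\nwarrow_y$, $p_2>\eta(e^\swarrow_y)$, $p_1=p_2-\eta(e^\swarrow_y)$; - Case 3: $f_1=e^\swarrow_y$, $f_2=e^\nearrow_y$, $p_1>\eta(e^\nwarrow_y)$, $p_2=p_1-\eta(e^\nwarrow_y)$; - Case 4: $f_1=e^\searrow_y$, $f_2=e^\nearrow_y$, $p_i>\eta(f_i)-\xi_y$, $\eta(f_1)-p_1=\eta(f_2)-p_2$. Broken traces. A broken trace is $\ell=(y_0,e_1,y_1,\dots,e_n,y_n)$, $n\ge1$, with $e_i=\langle y_{i-1},y_i\rangle$, $x_i=x_{i-1}+1$, $t_i-t_{i-1}\in\{\pm1\}$. $\ell\subseteq\bar S$ means $y_0,y_n\in\bar S$, $y_1,\dots,y_{n-1}\in S$, all $e_i\in\mathbb{E}(\bar S)$. $C(S)$ is the set of $\ell\subseteq\bar S$ with $y_0,y_n\in\partial\bar S$. Weight. $w_\eta(\ell)$ is the Lebesgue measure of the set of $p_1\in(0,\eta(e_1)]$ admitting $p_i\in(0,\eta(e_i)]$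 with $(e_{i-1},p_{i-1})\sim_{y_{i-1}}(e_i,p_i)$ for $i=2,\dots,n$. *)

(* Defs.v *)
From Stdlib Require Import Reals ZArith List ClassicalEpsilon.
Import ListNotations.
Open Scope R_scope.

Definition point : Type := (Z * Z)%type.
Definition tc (y : point) : Z := fst y.
Definition xc (y : point) : Z := snd y.

Definition lattice (y : point) : Prop := Z.Even (tc y + xc y).

Definition adjacent (y z : point) : Prop :=
  Z.abs (tc y - tc z) = 1%Z /\ Z.abs (xc y - xc z) = 1%Z.

(** An (unoriented) edge is encoded canonically by its endpoint with the
    smaller time coordinate, together with a direction:
    (y, true)  = <(t,x),(t+1,x+1)>,  (y, false) = <(t,x),(t+1,x-1)>. *)
Definition edge : Type := (point * bool)%type.
Definition edge_lo (e : edge) : point := fst e.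
Definition edge_hi (e : edge) : point :=
  (tc (fst e) + 1, if snd e then xc (fst e) + 1 else xc (fst e) - 1)%Z.

Definition e_NE (y : point) : edge := (y, true).
Definition e_SE (y : point) : edge := (y, false).
Definition e_SW (y : point) : edge := ((tc y - 1, xc y - 1)%Z, true).
Definition e_NW (y : point) : edge := ((tc y - 1, xc y + 1)%Z, false).

Definition rect (a b c d : Z) (y : point) : Prop :=
  lattice y /\ (a <= tc y + xc y <= b)%Z /\ (c <= tc y - xc y <= d)%Z.

Definition inSbar (S : point -> Prop) (y : point) : Prop :=
  S y \/ exists z, S z /\ adjacent z y.
Definition inBd (S : point -> Prop) (y : point) : Prop := inSbar S y /\ ~ S y.
Definition inE (S : point -> Prop) (e : edge) : Prop := S (edge_lo e) \/ S (edge_hi e).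

Definition flow_field (S : point -> Prop) (eta : edge -> R) : Prop :=
  (forall e, inE S e -> 0 <= eta e) /\
  (forall y, S y -> eta (e_NW y) + eta (e_NE y) = eta (e_SW y) + eta (e_SE y)).

Definition xi (eta : edge -> R) (y : point) : R := Rmin (eta (e_NE y)) (eta (e_SE y)).

Definition assoc (S : point -> Prop) (eta : edge -> R) (y : point)
  (f1 : edge) (p1 : R) (f2 : edge) (p2 : R) : Prop :=
  S y /\ (f1 = e_SW y \/ f1 = e_SE y) /\ (f2 = e_NW y \/ f2 = e_NE y) /\
  0 < p1 <= eta f1 /\ 0 < p2 <= eta f2 /\
  ( (f1 = e_SW y /\ f2 = e_NW y /\ p1 <= Rmin (eta f1) (eta f2) /\ p2 = p1)
 \/ (f1 = e_SE y /\ f2 = e_NW y /\ p2 > eta (e_SW y) /\ p1 = p2 - eta (e_SW y))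
 \/ (f1 = e_SW y /\ f2 = e_NE y /\ p1 > eta (e_NW y) /\ p2 = p1 - eta (e_NW y))
 \/ (f1 = e_SE y /\ f2 = e_NE y /\ p1 > eta f1 - xi eta y /\ p2 > eta f2 - xi eta y /\
     eta f1 - p1 = eta f2 - p2) ).

(** Broken traces, represented by their list of points [y0; ...; yn]. *)
Definition edge_between (y z : point) : edge :=
  if Z.eqb (tc z) (tc y + 1) then e_NE y else e_SE z.

Fixpoint steps (l : list point) : Prop :=
  match l with
  | y :: ((z :: _) as r) =>
      xc z = (xc y + 1)%Z /\ (tc z = (tc y + 1)%Z \/ tc z = (tc y - 1)%Z) /\ steps r
  | _ => True
  end.

Definition is_trace (l : list point) : Prop := (2 <= length l)%nat /\ steps l.

Fixpoint trace_edges (l : list point) : list edge :=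
  match l with
  | y :: ((z :: _) as r) => edge_between y z :: trace_edges r
  | _ => []
  end.

Definition in_C (S : point -> Prop) (l : list point) : Prop :=
  is_trace l /\
  inBd S (hd (0, 0)%Z l) /\ inBd S (last l (0, 0)%Z) /\
  Forall S (removelast (tl l)) /\
  Forall (inE S) (trace_edges l).

(** chain pts e p : pts = [y_i; ...; y_n], e = e_i, p = p_i; there exist
    p_{i+1},...,p_n with the required associations. *)
Fixpoint chain (S : point -> Prop) (eta : edge -> R) (pts : list point)
  (e : edge) (p : R) : Prop :=
  match pts with
  | y :: ((z :: _) as r) =>
      exists p', assoc S eta y e p (edge_between y z) p' /\
                 chain S eta r (edge_between y z) p'
  | _ => True
  end.

Definition wset (S : point -> Prop) (eta : edge -> R) (l : list point) (p : R) : Prop :=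
  match l with
  | y0 :: ((y1 :: _) as r) =>
      0 < p <= eta (edge_between y0 y1) /\ chain S eta r (edge_between y0 y1) p
  | _ => False
  end.

Definition is_cover (A : R -> Prop) (u v : nat -> R) : Prop :=
  (forall n, u n <= v n) /\ (forall p, A p -> exists n, u n < p < v n).

Definition is_lebesgue_measure (A : R -> Prop) (m : R) : Prop :=
  (forall u v s, is_cover A u v -> infinite_sum (fun n => v n - u n) s -> m <= s) /\
  (forall eps, 0 < eps -> exists u v s,
      is_cover A u v /\ infinite_sum (fun n => v n - u n) s /\ s < m + eps).

Definition lebesgue_measure (A : R -> Prop) : R :=
  epsilon (inhabits 0) (is_lebesgue_measure A).

Definition w (S : point -> Prop) (eta : edge -> R) (l : list point) : R :=
  lebesgue_measure (wset S eta l).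

Definition E_low (S : point -> Prop) (e : edge) : Prop :=
  exists y, S y /\
    ((e = e_SW y /\ inBd S (tc y - 1, xc y - 1)%Z) \/
     (e = e_SE y /\ inBd S (tc y + 1, xc y - 1)%Z)).
Definition E_up (S : point -> Prop) (e : edge) : Prop :=
  exists y, S y /\
    ((e = e_NW y /\ inBd S (tc y - 1, xc y + 1)%Z) \/
     (e = e_NE y /\ inBd S (tc y + 1, xc y + 1)%Z)).

Definition sum_list {A : Type} (f : A -> R) (L : list A) : R :=
  fold_right (fun a acc => f a + acc) 0 L.

(* Main.v *)
Require Import Defs.
From Stdlib Require Import Reals ZArith List Lra Lia ClassicalEpsilon.
Import ListNotations.
Open Scope R_scope.

Lemma sum_list_app {A} (f : A -> R) L1 L2 :
  sum_list f (L1 ++ L2) = sum_list f L1 + sum_list f L2.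
Proof. induction L1; simpl; [lra|]. rewrite IHL1; lra. Qed.

Lemma sum_list_nonneg {A} (f : A -> R) L :
  (forall x, In x L -> 0 <= f x) -> 0 <= sum_list f L.
Proof.
  induction L; simpl; intros H; [lra|].
  assert (0 <= f a) by auto. assert (0 <= sum_list f L) by auto. lra.
Qed.

Lemma fin_cover (u v : nat -> R) (Huv : forall n, u n <= v n) :
  forall n (L : list nat), (length L <= n)%nat -> forall a b, a <= b ->
  (forall x, a <= x <= b -> exists k, In k L /\ u k < x < v k) ->
  b - a <= sum_list (fun k => v k - u k) L.
Proof.
  induction n; intros L HL a b Hab Hc.
  - destruct L; [|simpl in HL; lia].
    destruct (Hc a) as [k [Hk _]]; [lra|]. destruct Hk.
  - destruct (Hc a) as [k [Hk Hka]]; [lra|].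
    destruct (in_split _ _ Hk) as [L1 [L2 ->]].
    rewrite sum_list_app; simpl.
    assert (H1 : 0 <= sum_list (fun k => v k - u k) L1)
      by (apply sum_list_nonneg; intros; specialize (Huv x); lra).
    assert (H2 : 0 <= sum_list (fun k => v k - u k) L2)
      by (apply sum_list_nonneg; intros; specialize (Huv x); lra).
    destruct (Rlt_or_le b (v k)) as [Hb|Hb]; [lra|].
    assert (IH : b - v k <= sum_list (fun k => v k - u k) (L1 ++ L2)).
    { apply IHn.
      - rewrite length_app in *; simpl in HL; lia.
      - lra.
      - intros x Hx. destruct (Hc x) as [k' [Hk' Hx']]; [lra|].
        exists k'; split; [|lra].
        apply in_app_iff in Hk'; apply in_app_iff; destruct Hk' as [?|[?|?]]; auto.
        subst; lra. }
    rewrite sum_list_app in IH. lra.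
Qed.

Lemma sum_seq (g : nat -> R) N : sum_list g (seq 0 (S N)) = sum_f_R0 g N.
Proof.
  induction N; [simpl; lra|].
  rewrite seq_S, sum_list_app, IHN. simpl. lra.
Qed.

Lemma sum_f_mono (g : nat -> R) (Hg : forall n, 0 <= g n) N k :
  sum_f_R0 g N <= sum_f_R0 g (k + N).
Proof. induction k; simpl; [lra|]. specialize (Hg (S (k + N))). lra. Qed.

Lemma partial_le (g : nat -> R) s (Hg : forall n, 0 <= g n) :
  infinite_sum g s -> forall N, sum_f_R0 g N <= s.
Proof.
  intros Hs N. destruct (Rle_or_lt (sum_f_R0 g N) s) as [?|Hlt]; [auto|].
  exfalso. destruct (Hs (sum_f_R0 g N - s)) as [N0 HN0]; [lra|].
  specialize (HN0 (N0 + N)%nat ltac:(lia)).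
  pose proof (sum_f_mono g Hg N N0).
  unfold R_dist in HN0. pose proof (Rle_abs (sum_f_R0 g (N0 + N) - s)). lra.
Qed.

Lemma list_bound (l : list R) : exists N, forall n, In (INR n) l -> (n < N)%nat.
Proof.
  induction l as [|y l [N HN]].
  - exists 0%nat; intros n [].
  - exists (Nat.max N (Z.to_nat (up y))). intros n [H|H].
    + subst. destruct (archimed (INR n)) as [H1 _].
      rewrite INR_IZR_INZ in H1 at 2. apply Rgt_lt, lt_IZR in H1. lia.
    + specialize (HN n H). lia.
Qed.

Lemma cover_finite (u v : nat -> R) a b :
  (forall x, a <= x <= b -> exists n, u n < x < v n) ->
  exists N, forall x, a <= x <= b -> exists n, (n < N)%nat /\ u n < x < v n.
Proof.
  intros Hc.
  assert (cf : forall x, (exists y, (fun y0 x0 => exists n, y0 = INR n /\ u n < x0 < v n) x y) ->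
                         (fun y0 => exists n, y0 = INR n) x).
  { intros x [y [n [-> _]]]. exists n; auto. }
  set (fam := mkfamily _ _ cf).
  assert (Hco : covering_open_set (fun c => a <= c <= b) fam).
  { split.
    - intros x Hx. destruct (Hc x Hx) as [n Hn]. exists (INR n). simpl. exists n; auto.
    - intros y x [n [-> Hn]].
      assert (Hd : 0 < Rmin (x - u n) (v n - x)) by (apply Rmin_glb_lt; lra).
      exists (mkposreal _ Hd). intros z Hz. unfold disc in Hz; simpl in Hz.
      exists n; split; auto. apply Rabs_def2 in Hz.
      pose proof (Rmin_l (x - u n) (v n - x)). pose proof (Rmin_r (x - u n) (v n - x)). lra. }
  destruct (compact_P3 a b fam Hco) as [D [Hcov [l Hl]]].
  destruct (list_bound l) as [N HN]. exists N.
  intros x Hx. destruct (Hcov x Hx) as [y [[n [-> Hn]] HD]].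
  exists n; split; auto. apply HN. apply Hl. split; auto. exists n; auto.
Qed.

Lemma lm_unique A m1 m2 :
  is_lebesgue_measure A m1 -> is_lebesgue_measure A m2 -> m1 = m2.
Proof.
  intros [H1a H1b] [H2a H2b].
  assert (forall m m', (forall u v s, is_cover A u v -> infinite_sum (fun n => v n - u n) s -> m <= s) ->
     (forall eps, 0 < eps -> exists u v s,
      is_cover A u v /\ infinite_sum (fun n => v n - u n) s /\ s < m' + eps) -> m <= m').
  { intros m m' Ha Hb. destruct (Rle_or_lt m m') as [?|Hlt]; auto.
    destruct (Hb (m - m')) as [u [v [s [Hc [Hs Hlt2]]]]]; [lra|].
    specialize (Ha u v s Hc Hs). lra. }
  apply Rle_antisym; eauto.
Qed.

Lemma interval_lm (A : R -> Prop) al be :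
  (forall p, A p <-> al < p <= be) -> is_lebesgue_measure A (Rmax 0 (be - al)).
Proof.
  intros HA. split.
  - intros u v s [Huv Hc] Hs.
    assert (Hg : forall n, 0 <= v n - u n) by (intros n; specialize (Huv n); lra).
    assert (Hs0 : 0 <= s) by (pose proof (partial_le _ s Hg Hs 0); specialize (Hg 0%nat); simpl in *; lra).
    apply Rmax_lub; auto.
    destruct (Rle_or_lt (be - al) s) as [?|Hlt]; auto. exfalso.
    set (e := (be - al - s) / 2).
    destruct (cover_finite u v (al + e) be) as [N HN].
    { intros x Hx. apply Hc. apply HA. unfold e in *; lra. }
    assert (Hf := fin_cover u v Huv (length (seq 0 N)) (seq 0 N) (le_n _) (al + e) be
                   ltac:(unfold e in *; lra)).
    assert (be - (al + e) <= sum_list (fun k => v k - u k) (seq 0 N)).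
    { apply Hf. intros x Hx. destruct (HN x Hx) as [n [Hn Hx']]. exists n; split; auto.
      apply in_seq; lia. }
    assert (sum_list (fun k => v k - u k) (seq 0 N) <= s).
    { destruct N; [simpl; lra|]. rewrite sum_seq. apply partial_le; auto. }
    unfold e in *; lra.
  - intros eps Heps.
    set (m := Rmax 0 (be - al)).
    exists (fun n => match n with O => al | _ => 0 end),
           (fun n => match n with O => al + m + eps / 2 | _ => 0 end), (m + eps/2).
    assert (Hm : 0 <= m /\ be - al <= m) by (split; [apply Rmax_l|apply Rmax_r]).
    split; [split|split].
    + intros [|n]; lra.
    + intros p Hp. apply HA in Hp. exists O. lra.
    + intros e He. exists O. intros n _.
      assert (sum_f_R0 (fun n : nat =>
        match n with O => al + m + eps / 2 | S _ => 0 end - match n with O => al | S _ => 0 end) n = m + eps/2).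
      { induction n; simpl; [lra|]. rewrite IHn. lra. }
      rewrite H. unfold R_dist. rewrite Rminus_diag, Rabs_R0. auto.
    + lra.
Qed.

Lemma interval_measure (A : R -> Prop) al be :
  (forall p, A p <-> al < p <= be) -> lebesgue_measure A = Rmax 0 (be - al).
Proof.
  intros HA. pose proof (interval_lm A al be HA) as H.
  unfold lebesgue_measure.
  apply (lm_unique A); auto.
  apply epsilon_spec. eauto.
Qed.

Definition len (x y : R) : R := Rmax 0 (y - x).
Definition step (y z : point) : Prop :=
  xc z = (xc y + 1)%Z /\ (tc z = (tc y + 1)%Z \/ tc z = (tc y - 1)%Z).

Ltac rmm := unfold len in *; unfold Rmax, Rmin in *; repeat destruct Rle_dec; lra.

Lemma pe2 (t1 t2 x1 x2 : Z) : t1 = t2 -> x1 = x2 -> (t1, x1) = (t2, x2).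
Proof. intros -> ->; reflexivity. Qed.
Lemma pe3 (t1 t2 x1 x2 : Z) (b : bool) : t1 = t2 -> x1 = x2 -> ((t1, x1), b) = ((t2, x2), b).
Proof. intros -> ->; reflexivity. Qed.
Ltac peq := first [apply pe3 | apply pe2]; lia.

Lemma max_lt a b x : Rmax a b < x <-> a < x /\ b < x.
Proof. unfold Rmax; destruct Rle_dec; split; intros; try lra. Qed.
Lemma le_min a b x : x <= Rmin a b <-> x <= a /\ x <= b.
Proof. unfold Rmin; destruct Rle_dec; split; intros; try lra. Qed.

Lemma steps_cons y z r : steps (y :: z :: r) <-> step y z /\ steps (z :: r).
Proof. unfold step; simpl; tauto. Qed.

Lemma sum_list_map {A B} (f : B -> R) (g : A -> B) L :
  sum_list f (map g L) = sum_list (fun x => f (g x)) L.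
Proof. induction L; simpl; congruence. Qed.
Lemma sum_list_ext_in {A} (f g : A -> R) L :
  (forall x, In x L -> f x = g x) -> sum_list f L = sum_list g L.
Proof. induction L; simpl; intros H; auto. rewrite H, IHL; auto. Qed.

Lemma shiftNW A B x y m d : len (Rmax A (Rmax 0 (x - d))) (Rmin B (Rmin m (y - d))) =
  len (Rmax (Rmax A 0 + d) x) (Rmin (Rmin B m + d) y).
Proof. rmm. Qed.
Lemma shiftNE A B x y m t : len (Rmax A (Rmax (Rmax 0 t) (x + t))) (Rmin B (Rmin m (y + t))) =
  len (Rmax (Rmax A (Rmax 0 t) - t) x) (Rmin (Rmin B m - t) y).
Proof. rmm. Qed.
Lemma len_shift x y d : len (x + d) (y + d) = len x y.
Proof. unfold len; f_equal; ring. Qed.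
Lemma split_len lo hi t : len lo (Rmin hi t) + len (Rmax lo t) hi = len lo hi.
Proof. rmm. Qed.
Lemma max_le0 x : 0 <= x -> Rmax x 0 = x. Proof. rmm. Qed.
Lemma min_ge x y : x <= y -> Rmin x y = x. Proof. rmm. Qed.

Lemma combine A B ef t eNW eNE : 0 <= eNW - t -> ef - t <= eNE ->
  len (Rmax (Rmax A 0 + (eNW - t)) 0) (Rmin (Rmin B (Rmin ef t) + (eNW - t)) eNW) +
  len (Rmax (Rmax A (Rmax 0 t) - t) 0) (Rmin (Rmin B ef - t) eNE) =
  len (Rmax A 0) (Rmin B ef).
Proof.
  intros H1 H2.
  rewrite (max_le0 (Rmax A 0 + (eNW - t))) by (pose proof (Rmax_r A 0); lra).
  rewrite (min_ge (Rmin B (Rmin ef t) + (eNW - t))) by (pose proof (Rmin_r B (Rmin ef t)); pose proof (Rmin_r ef t); lra).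
  rewrite (max_le0 (Rmax A (Rmax 0 t) - t)) by (pose proof (Rmax_r A (Rmax 0 t)); pose proof (Rmax_r 0 t); lra).
  rewrite (min_ge (Rmin B ef - t)) by (pose proof (Rmin_r B ef); lra).
  rewrite len_shift. unfold Rminus. rewrite len_shift.
  rewrite Rmin_assoc, Rmax_assoc. apply split_len.
Qed.

Lemma sum_list_plus {A} (f g : A -> R) L :
  sum_list (fun x => f x + g x) L = sum_list f L + sum_list g L.
Proof. induction L; simpl; lra. Qed.
Lemma sum_list_minus {A} (f g : A -> R) L :
  sum_list (fun x => f x - g x) L = sum_list f L - sum_list g L.
Proof. induction L; simpl; lra. Qed.
Lemma sum_list_zero {A} (L : list A) : sum_list (fun _ => 0) L = 0.
Proof. induction L; simpl; lra. Qed.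
Lemma sum_list_exch {A B} (F : A -> B -> R) L1 L2 :
  sum_list (fun i => sum_list (fun j => F i j) L2) L1 =
  sum_list (fun j => sum_list (fun i => F i j) L1) L2.
Proof.
  induction L1; simpl.
  - rewrite sum_list_zero; auto.
  - rewrite IHL1, <- sum_list_plus; auto.
Qed.
Lemma sum_flat_map {A B} (f : B -> R) (g : A -> list B) L :
  sum_list f (flat_map g L) = sum_list (fun x => sum_list f (g x)) L.
Proof. induction L; simpl; auto. rewrite sum_list_app, IHL; auto. Qed.

Definition zs (n : nat) : list Z := map Z.of_nat (seq 0 n).
Lemma in_zs n k : In k (zs n) <-> (0 <= k < Z.of_nat n)%Z.
Proof.
  unfold zs; rewrite in_map_iff. split.
  - intros [m [<- Hm]]. apply in_seq in Hm. lia.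
  - intros H. exists (Z.to_nat k). split; [lia|]. apply in_seq; lia.
Qed.

Lemma telescope (g : Z -> R) n :
  sum_list (fun k => g (k - 1)%Z - g k) (zs n) = g (-1)%Z - g (Z.of_nat n - 1)%Z.
Proof.
  induction n.
  - cbn. lra.
  - unfold zs in *. rewrite seq_S, map_app, sum_list_app, IHn.
    replace (0+n)%nat with n by lia. rewrite Nat2Z.inj_succ.
    replace (Z.succ (Z.of_nat n) - 1)%Z with (Z.of_nat n) by lia.
    unfold sum_list at 1. cbn [map fold_right]. lra.
Qed.

Lemma nodup_flat_map {A B K} (key : A -> K) (hk : B -> K) (g : A -> list B) L :
  NoDup (map key L) -> (forall x, In x L -> NoDup (g x)) ->
  (forall x z, In x L -> In z (g x) -> hk z = key x) -> NoDup (flat_map g L).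
Proof.
  induction L as [|a L IH]; intros H1 H2 H3; cbn; [constructor|].
  inversion H1; subst. apply NoDup_app.
  - apply H2; cbn; auto.
  - apply IH; auto; intros; [apply H2|apply H3]; cbn; auto.
  - intros z Hz Hz'. apply in_flat_map in Hz'. destruct Hz' as [x [Hx Hzx]].
    assert (E1 := H3 a z (or_introl eq_refl) Hz).
    assert (E2 := H3 x z (or_intror Hx) Hzx).
    apply H4. rewrite <- E1, E2. apply in_map; auto.
Qed.

Section Grid.
Variables a' b' c' d' : Z.
Variable eta : edge -> R.
Local Notation S0 := (rect (2*a') (2*b') (2*c') (2*d')).

Definition P (i j : Z) : point := ((a'+d'+i-j)%Z, (a'-d'+i+j)%Z).
Definition MM := (b'-a')%Z.
Definition NN := (d'-c')%Z.
Definition inR i j := (0 <= i <= MM /\ 0 <= j <= NN)%Z.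

Lemma S_P i j : S0 (P i j) <-> inR i j.
Proof.
  unfold rect, lattice, inR, MM, NN, P, tc, xc; cbn [fst snd]. split.
  - intros [_ [? ?]]; lia.
  - intros [? ?]; split; [exists (a'+i)%Z; lia| lia].
Qed.

Lemma S_inv y : S0 y -> exists i j, y = P i j /\ inR i j.
Proof.
  destruct y as [t x]. unfold rect, lattice, inR, MM, NN, P, tc, xc; cbn [fst snd].
  intros [[k Hk] [H1 H2]]. exists (k - a')%Z, (d' - k + x)%Z. split; [peq | lia].
Qed.

Lemma P_inj i j i' j' : P i j = P i' j' -> i = i' /\ j = j'.
Proof. unfold P; intros H; injection H; lia. Qed.

Lemma step_fwd i j z : step (P i j) z <-> z = P (i+1) j \/ z = P i (j+1).
Proof.
  destruct z as [t x]; unfold step, P, tc, xc; cbn [fst snd]; split.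
  - intros [H1 [H2|H2]]; [left|right]; peq.
  - intros [H|H]; injection H; lia.
Qed.

Lemma step_bwd i j y : step y (P i j) -> y = P (i-1) j \/ y = P i (j-1).
Proof.
  destruct y as [t x]; unfold step, P, tc, xc; cbn [fst snd].
  intros [H1 [H2|H2]]; [left|right]; peq.
Qed.

Lemma eb_NE i j : edge_between (P i j) (P (i+1) j) = e_NE (P i j).
Proof. unfold edge_between; destruct (Z.eqb_spec (tc (P (i+1) j)) (tc (P i j) + 1)); auto.
  exfalso; unfold P, tc in *; cbn [fst snd] in *; lia. Qed.

Lemma eb_NW i j : edge_between (P i j) (P i (j+1)) = e_NW (P i j).
Proof. unfold edge_between; destruct (Z.eqb_spec (tc (P i (j+1))) (tc (P i j) + 1)).
  - exfalso; unfold P, tc in *; cbn [fst snd] in *; lia.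
  - unfold e_SE, e_NW, P, tc, xc; cbn [fst snd]; peq. Qed.

Lemma eb_SW i j : edge_between (P (i-1) j) (P i j) = e_SW (P i j).
Proof. unfold edge_between; destruct (Z.eqb_spec (tc (P i j)) (tc (P (i-1) j) + 1)).
  - unfold e_NE, e_SW, P, tc, xc; cbn [fst snd]; peq.
  - exfalso; unfold P, tc in *; cbn [fst snd] in *; lia. Qed.

Lemma eb_SE i j : edge_between (P i (j-1)) (P i j) = e_SE (P i j).
Proof. unfold edge_between; destruct (Z.eqb_spec (tc (P i j)) (tc (P i (j-1)) + 1)); auto.
  exfalso; unfold P, tc in *; cbn [fst snd] in *; lia. Qed.

Lemma SW_P i j : e_SW (P i j) = e_NE (P (i-1) j).
Proof. unfold e_NE, e_SW, P, tc, xc; cbn [fst snd]; peq. Qed.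
Lemma SE_P i j : e_SE (P i j) = e_NW (P i (j-1)).
Proof. unfold e_NW, e_SE, P, tc, xc; cbn [fst snd]; peq. Qed.

Lemma eb_lower y z : step y z -> edge_between y z = e_SW z \/ edge_between y z = e_SE z.
Proof.
  destruct y as [t x], z as [t' x']; unfold step, edge_between, e_SW, e_SE, e_NE, tc, xc; cbn [fst snd].
  intros [H1 H2]. destruct (Z.eqb_spec t' (t+1)); [left; peq | right; auto].
Qed.

Lemma eb_ends y z : step y z ->
  (edge_lo (edge_between y z) = y /\ edge_hi (edge_between y z) = z) \/
  (edge_lo (edge_between y z) = z /\ edge_hi (edge_between y z) = y).
Proof.
  destruct y as [t x], z as [t' x']; unfold step, edge_between, edge_lo, edge_hi, e_SE, e_NE, tc, xc; cbn [fst snd].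
  intros [H1 H2]. destruct (Z.eqb_spec t' (t+1)); [left|right]; split; cbn; auto; peq.
Qed.

Lemma eb_inE y z : step y z -> S0 y \/ S0 z -> inE S0 (edge_between y z).
Proof. intros Hs H; unfold inE; destruct (eb_ends y z Hs) as [[-> ->]|[-> ->]]; tauto. Qed.

Lemma eb_inE_inv y z : step y z -> inE S0 (edge_between y z) -> S0 y \/ S0 z.
Proof. intros Hs H; unfold inE in H; destruct (eb_ends y z Hs) as [[E1 E2]|[E1 E2]];
  rewrite E1, E2 in H; tauto. Qed.

Lemma hi_NW y : edge_hi (e_NW y) = y.
Proof. destruct y as [t x]; unfold edge_hi, e_NW, tc, xc; cbn. peq. Qed.
Lemma hi_SW y : edge_hi (e_SW y) = y.
Proof. destruct y as [t x]; unfold edge_hi, e_SW, tc, xc; cbn. peq. Qed.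

Lemma four_inE y : S0 y ->
  inE S0 (e_NE y) /\ inE S0 (e_NW y) /\ inE S0 (e_SW y) /\ inE S0 (e_SE y).
Proof.
  intros H; unfold inE; repeat split; [left|right|right|left]; auto;
  rewrite ?hi_NW, ?hi_SW; auto.
Qed.


Hypothesis Hflow : flow_field S0 eta.

Lemma flow_at y : S0 y -> 0 <= eta (e_NE y) /\ 0 <= eta (e_NW y) /\ 0 <= eta (e_SW y) /\
  0 <= eta (e_SE y) /\ eta (e_NW y) + eta (e_NE y) = eta (e_SW y) + eta (e_SE y).
Proof.
  intros H. destruct Hflow as [Hn Hc]. destruct (four_inE y H) as (?&?&?&?).
  repeat split; auto.
Qed.

Definition tau (y : point) (f : edge) : R :=
  if snd f then eta (e_NW y) else eta (e_NW y) - eta (e_SW y).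

Lemma snd_SW y : snd (e_SW y) = true. Proof. reflexivity. Qed.
Lemma snd_SE y : snd (e_SE y) = false. Proof. reflexivity. Qed.
Lemma n_NE_NW y : e_NE y <> e_NW y. Proof. unfold e_NE, e_NW; intro H; inversion H. Qed.
Lemma n_SW_SE y : e_SW y <> e_SE y. Proof. unfold e_SW, e_SE; intro H; inversion H. Qed.

Lemma assoc_NE y f p p' : S0 y -> (f = e_SW y \/ f = e_SE y) ->
  (assoc S0 eta y f p (e_NE y) p' <-> (0 < p <= eta f /\ tau y f < p /\ p' = p - tau y f)).
Proof.
  intros Hy Hf. destruct (flow_at y Hy) as (h1&h2&h3&h4&h5).
  pose proof (n_NE_NW y). pose proof (n_SW_SE y).
  unfold assoc, xi, tau. destruct Hf as [-> | ->]; rewrite ?snd_SW, ?snd_SE; split.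
  - intros (_&_&_&?&?&C).
    destruct C as [(E1&E2&?)|[(E1&E2&?&?)|[(E1&E2&?&?)|(E1&E2&?&?&?)]]]; try congruence.
    unfold Rmin in *; repeat destruct Rle_dec; repeat split; lra.
  - intros (?&?&->). split; [auto|]. split; [auto|]. split; [auto|]. split; [lra|].
    split; [lra|]. right; right; left. repeat split; auto; lra.
  - intros (_&_&_&?&?&C).
    destruct C as [(E1&E2&?)|[(E1&E2&?&?)|[(E1&E2&?&?)|(E1&E2&?&?&?)]]]; try congruence.
    unfold Rmin in *; repeat destruct Rle_dec; repeat split; lra.
  - intros (?&?&->). split; [auto|]. split; [auto|]. split; [auto|]. split; [lra|].
    split; [lra|]. right; right; right. repeat split; auto; unfold Rmin; repeat destruct Rle_dec; lra.
Qed.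

Lemma assoc_NW y f p p' : S0 y -> (f = e_SW y \/ f = e_SE y) ->
  (assoc S0 eta y f p (e_NW y) p' <->
     (0 < p <= eta f /\ p <= tau y f /\ p' = p + (eta (e_NW y) - tau y f))).
Proof.
  intros Hy Hf. destruct (flow_at y Hy) as (h1&h2&h3&h4&h5).
  pose proof (n_NE_NW y). pose proof (n_SW_SE y).
  unfold assoc, xi, tau. destruct Hf as [-> | ->]; rewrite ?snd_SW, ?snd_SE; split.
  - intros (_&_&_&?&?&C).
    destruct C as [(E1&E2&?&?)|[(E1&E2&?&?)|[(E1&E2&?&?)|(E1&E2&?&?&?)]]]; try congruence.
    unfold Rmin in *; repeat destruct Rle_dec; repeat split; lra.
  - intros (?&?&->). split; [auto|]. split; [auto|]. split; [auto|]. split; [lra|].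
    split; [lra|]. left. repeat split; auto; unfold Rmin; repeat destruct Rle_dec; lra.
  - intros (_&_&_&?&?&C).
    destruct C as [(E1&E2&?&?)|[(E1&E2&?&?)|[(E1&E2&?&?)|(E1&E2&?&?&?)]]]; try congruence.
    unfold Rmin in *; repeat destruct Rle_dec; repeat split; lra.
  - intros (?&?&->). split; [auto|]. split; [auto|]. split; [auto|]. split; [lra|].
    split; [lra|]. right; left. repeat split; auto; lra.
Qed.


Definition stepab (y z : point) (f : edge) (X : R*R) : R*R :=
  if Z.eqb (tc z) (tc y + 1)
  then (Rmax (Rmax 0 (tau y f)) (fst X + tau y f), Rmin (eta f) (snd X + tau y f))
  else (Rmax 0 (fst X - (eta (e_NW y) - tau y f)),
        Rmin (Rmin (eta f) (tau y f)) (snd X - (eta (e_NW y) - tau y f))).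

Fixpoint ab (q : list point) (f : edge) : R*R :=
  match q with
  | [] => (0, 0)
  | [z] => (0, eta f)
  | y :: ((z :: _) as r) => stepab y z f (ab r (edge_between y z))
  end.

Lemma ab_cons y z r f : ab (y :: z :: r) f = stepab y z f (ab (z :: r) (edge_between y z)).
Proof. reflexivity. Qed.
Lemma chain_cons y z r f p : chain S0 eta (y :: z :: r) f p <->
  exists p', assoc S0 eta y f p (edge_between y z) p' /\ chain S0 eta (z :: r) (edge_between y z) p'.
Proof. reflexivity. Qed.

Lemma dir y z : step y z ->
  (Z.eqb (tc z) (tc y + 1) = true /\ edge_between y z = e_NE y) \/
  (Z.eqb (tc z) (tc y + 1) = false /\ edge_between y z = e_NW y).
Proof.
  destruct y as [t x], z as [t' x']; unfold step, edge_between, e_SE, e_NW, tc, xc; cbn [fst snd].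
  intros [H1 H2]. destruct (Z.eqb_spec t' (t+1)); [left|right]; split; auto. peq.
Qed.

Lemma CS q : steps q -> Forall S0 (removelast q) -> q <> [] ->
  forall f, (forall y z r, q = y :: z :: r -> f = e_SW y \/ f = e_SE y) ->
  forall p, (0 < p <= eta f /\ chain S0 eta q f p) <-> fst (ab q f) < p <= snd (ab q f).
Proof.
  induction q as [|y q IH]; intros Hst HS Hne f Hf p; [congruence|].
  destruct q as [|z r].
  - simpl. tauto.
  - apply steps_cons in Hst. destruct Hst as [Hyz Hst].
    simpl removelast in HS. apply Forall_cons_iff in HS. destruct HS as [Hy HS].
    specialize (Hf y z r eq_refl).
    assert (IH' := fun f' Hf' => IH Hst HS ltac:(congruence) f' Hf').
    rewrite ab_cons, chain_cons. unfold stepab.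
    destruct (eb_lower y z Hyz) as [Hl|Hl];
    destruct (dir y z Hyz) as [[E1 E2]|[E1 E2]]; rewrite E1, E2 in *;
    (assert (IH2 : forall p', 0 < p' <= eta (edge_between y z) /\ chain S0 eta (z :: r) (edge_between y z) p' <->
         fst (ab (z :: r) (edge_between y z)) < p' <= snd (ab (z :: r) (edge_between y z)))
     by (intros; apply IH'; intros y' z' r' Heq; injection Heq as <- _; rewrite E2; auto));
    rewrite E2 in IH2; cbn [fst snd];
    destruct (ab (z :: r) _) as [al be]; cbn [fst snd] in *;
    rewrite ?max_lt, ?le_min.
    all: split; [intros [Hp [p' [Has Hch]]]; pose proof Has as Has';
                 destruct Has' as (_&_&_&_&Hp2&_) |].
    all: try (apply assoc_NE in Has; auto); try (apply assoc_NW in Has; auto).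
    all: try (destruct Has as (_&Ht&->); destruct (proj1 (IH2 _) (conj Hp2 Hch)); lra).
    all: intros H; assert (Hp : 0 < p <= eta f) by (pose proof (Rmin_l (eta f) (tau y f)); lra).
    all: split; [exact Hp|].
    + exists (p - tau y f). split; [apply assoc_NE; auto; repeat split; lra|].
      apply (IH2 (p - tau y f)); lra.
    + exists (p + (eta (e_NW y) - tau y f)). split; [apply assoc_NW; auto; repeat split; lra|].
      apply (IH2 _); lra.
    + exists (p - tau y f). split; [apply assoc_NE; auto; repeat split; lra|].
      apply (IH2 (p - tau y f)); lra.
    + exists (p + (eta (e_NW y) - tau y f)). split; [apply assoc_NW; auto; repeat split; lra|].
      apply (IH2 _); lra.
Qed.

Definition inRb i j : bool := andb (andb (andb (Z.leb 0 i) (Z.leb i MM)) (Z.leb 0 j)) (Z.leb j NN).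
Lemma inRb_spec i j : inRb i j = true <-> inR i j.
Proof. unfold inRb, inR. rewrite !Bool.andb_true_iff, !Z.leb_le. tauto. Qed.

Fixpoint conts (k : nat) (i j : Z) : list (list point) :=
  match k with
  | O => []
  | S k' => map (cons (P i j))
      ((if inRb i (j+1) then conts k' i (j+1) else [[P i (j+1)]]) ++
       (if inRb (i+1) j then conts k' (i+1) j else [[P (i+1) j]]))
  end.
Definition sub k i j := if inRb i j then conts k i j else [[P i j]].
Lemma conts_S k i j : conts (S k) i j = map (cons (P i j)) (sub k i (j+1) ++ sub k (i+1) j).
Proof. reflexivity. Qed.

Definition enough (k : nat) i j := (MM - i + NN - j < Z.of_nat k)%Z.

Lemma conts_hd k i j q : In q (conts k i j) -> exists r, q = P i j :: r.
Proof. destruct k; simpl; [tauto|]. intros H; apply in_map_iff in H.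
  destruct H as [r [<- _]]; eauto. Qed.
Lemma sub_hd k i j q : In q (sub k i j) -> exists r, q = P i j :: r.
Proof. unfold sub; destruct (inRb i j); [apply conts_hd|]. intros [<-|[]]; eauto. Qed.

Lemma SE_P' i j : e_SE (P i (j+1)) = e_NW (P i j).
Proof. unfold e_NW, e_SE, P, tc, xc; cbn [fst snd]; peq. Qed.
Lemma SW_P' i j : e_SW (P (i+1) j) = e_NE (P i j).
Proof. unfold e_NE, e_SW, P, tc, xc; cbn [fst snd]; peq. Qed.
Lemma eqb_NW i j : Z.eqb (tc (P i (j+1))) (tc (P i j) + 1) = false.
Proof. apply Z.eqb_neq. unfold P, tc; cbn [fst snd]; lia. Qed.
Lemma eqb_NE i j : Z.eqb (tc (P (i+1) j)) (tc (P i j) + 1) = true.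
Proof. apply Z.eqb_eq. unfold P, tc; cbn [fst snd]; lia. Qed.

Definition lower f y := f = e_SW y \/ f = e_SE y.

Lemma tree_sum k : forall i j f A B, inR i j -> enough k i j -> lower f (P i j) ->
  sum_list (fun q => len (Rmax A (fst (ab q f))) (Rmin B (snd (ab q f)))) (conts k i j) =
  len (Rmax A 0) (Rmin B (eta f)).
Proof.
  induction k; intros i j f A B HR He Hl.
  - exfalso; unfold enough, inR in *; cbn in He; lia.
  - assert (Hsub : forall i' j' f' A' B', (inR i' j' -> enough k i' j' /\ lower f' (P i' j')) ->
      sum_list (fun q => len (Rmax A' (fst (ab q f'))) (Rmin B' (snd (ab q f')))) (sub k i' j') =
      len (Rmax A' 0) (Rmin B' (eta f'))).
    { intros i' j' f' A' B' H. unfold sub. destruct (inRb i' j') eqn:E.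
      - apply inRb_spec in E. destruct (H E). apply IHk; auto.
      - cbn. lra. }
    assert (Hy : S0 (P i j)) by (apply S_P; auto).
    destruct (flow_at _ Hy) as (h1&h2&h3&h4&h5).
    rewrite conts_S, sum_list_map, sum_list_app.
    set (t := tau (P i j) f).
    rewrite (sum_list_ext_in _ (fun q => len (Rmax (Rmax A 0 + (eta (e_NW (P i j)) - t)) (fst (ab q (e_NW (P i j)))))
        (Rmin (Rmin B (Rmin (eta f) t) + (eta (e_NW (P i j)) - t)) (snd (ab q (e_NW (P i j))))))).
    2:{ intros q Hq. destruct (sub_hd _ _ _ _ Hq) as [r ->]. cbv beta. rewrite ab_cons, eb_NW.
        unfold stepab. rewrite eqb_NW. fold t. destruct (ab _ _) as [x y]; cbn [fst snd].
        apply shiftNW. }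
    rewrite (sum_list_ext_in _ (fun q => len (Rmax (Rmax A (Rmax 0 t) - t) (fst (ab q (e_NE (P i j)))))
        (Rmin (Rmin B (eta f) - t) (snd (ab q (e_NE (P i j)))))) (sub k (i+1) j)).
    2:{ intros q Hq. destruct (sub_hd _ _ _ _ Hq) as [r ->]. cbv beta. rewrite ab_cons, eb_NE.
        unfold stepab. rewrite eqb_NE. fold t. destruct (ab _ _) as [x y]; cbn [fst snd].
        apply shiftNE. }
    assert (Hen : forall i' j', (MM - i' + NN - j' = MM - i + NN - j - 1)%Z -> enough k i' j').
    { intros. unfold enough in *. rewrite Nat2Z.inj_succ in He. lia. }
    rewrite !Hsub.
    2:{ intros _. split; [apply Hen; lia|]. left. symmetry; apply SW_P'. }
    2:{ intros _. split; [apply Hen; lia|]. right. symmetry; apply SE_P'. }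
    apply combine.
    + unfold t, tau; destruct Hl as [-> | ->]; rewrite ?snd_SW, ?snd_SE; lra.
    + unfold t, tau; destruct Hl as [-> | ->]; rewrite ?snd_SW, ?snd_SE; lra.
Qed.

Definition good (q : list point) := (2 <= length q)%nat /\ steps q /\
  Forall S0 (removelast q) /\ ~ S0 (last q (0,0)%Z).

Lemma good_cons y z r : S0 y -> step y z -> good (z :: r) -> good (y :: z :: r).
Proof.
  intros Hy Hs (H1&H2&H3&H4). unfold good. cbn [length] in *. split; [lia|].
  split; [apply steps_cons; auto|]. split.
  - destruct r; [cbn in H1; lia|]. simpl removelast. constructor; auto.
  - auto.
Qed.

Lemma good_pair y z : S0 y -> step y z -> ~ S0 z -> good [y; z].
Proof.
  intros Hy Hs Hz. unfold good. cbn. split; [lia|]. split; [unfold step in Hs; tauto|].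
  split; auto.
Qed.

Lemma conts_good k : forall i j q, inR i j -> In q (conts k i j) -> good q.
Proof.
  induction k; intros i j q HR Hq; [destruct Hq|].
  rewrite conts_S in Hq. apply in_map_iff in Hq. destruct Hq as [r [<- Hr]].
  assert (Hy : S0 (P i j)) by (apply S_P; auto).
  apply in_app_iff in Hr; destruct Hr as [Hr|Hr]; unfold sub in Hr.
  - destruct (inRb i (j+1)) eqn:E.
    + destruct (conts_hd _ _ _ _ Hr) as [r' ->]. apply good_cons; auto.
      * apply step_fwd; auto.
      * apply (IHk i (j+1)%Z); auto. apply inRb_spec; auto.
    + destruct Hr as [<-|[]]. apply good_pair; auto. apply step_fwd; auto.
      rewrite S_P, <- inRb_spec, E; discriminate.
  - destruct (inRb (i+1) j) eqn:E.
    + destruct (conts_hd _ _ _ _ Hr) as [r' ->]. apply good_cons; auto.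
      * apply step_fwd; auto.
      * apply (IHk (i+1)%Z j); auto. apply inRb_spec; auto.
    + destruct Hr as [<-|[]]. apply good_pair; auto. apply step_fwd; auto.
      rewrite S_P, <- inRb_spec, E; discriminate.
Qed.

Lemma good_conts k : forall i j q, inR i j -> enough k i j -> good q ->
  (exists r, q = P i j :: r) -> In q (conts k i j).
Proof.
  induction k; intros i j q HR He Hg [r ->].
  - exfalso; unfold enough, inR in *; cbn in He; lia.
  - destruct Hg as (H1&H2&H3&H4).
    destruct r as [|z r']; [cbn in H1; lia|].
    apply steps_cons in H2; destruct H2 as [Hs H2].
    simpl removelast in H3. apply Forall_cons_iff in H3. destruct H3 as [_ H3].
    rewrite conts_S. apply in_map_iff. exists (z :: r'). split; auto.
    apply in_app_iff. unfold sub.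
    assert (Hen : forall i' j', (MM - i' + NN - j' = MM - i + NN - j - 1)%Z -> enough k i' j').
    { intros. unfold enough in *. rewrite Nat2Z.inj_succ in He. lia. }
    assert (Hrec : forall i' j', z = P i' j' -> (MM - i' + NN - j' = MM - i + NN - j - 1)%Z ->
       In (z :: r') (if inRb i' j' then conts k i' j' else [[P i' j']])).
    { intros i' j' -> Hm. destruct (inRb i' j') eqn:E.
      - apply IHk; [apply inRb_spec; auto | apply Hen; auto | | eauto].
        destruct r' as [|w r''].
        + exfalso. apply H4. cbn. apply S_P, inRb_spec; auto.
        + split; [cbn; lia|]. split; [exact H2|]. split; [exact H3|]. exact H4.
      - destruct r' as [|w r'']; [left; auto|].
        exfalso. simpl removelast in H3. apply Forall_cons_iff in H3.
        destruct H3 as [H3 _]. apply S_P, inRb_spec in H3. congruence. }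
    apply step_fwd in Hs. destruct Hs as [->| ->]; [right|left]; apply Hrec; auto; lia.
Qed.

Lemma NoDup_map_inj {A B} (f : A -> B) L :
  (forall x y, In x L -> In y L -> f x = f y -> x = y) -> NoDup L -> NoDup (map f L).
Proof.
  induction L; intros Hi Hn; cbn; constructor.
  - intros H. apply in_map_iff in H. destruct H as [x [Hx HxL]].
    apply Hi in Hx; cbn; auto. subst. inversion Hn; auto.
  - inversion Hn; apply IHL; auto. intros; apply Hi; cbn; auto.
Qed.

Lemma zs_nodup n : NoDup (zs n).
Proof. apply NoDup_map_inj; [intros; lia|apply seq_NoDup]. Qed.

Lemma conts_nodup k : forall i j, NoDup (conts k i j).
Proof.
  induction k; intros i j; [constructor|].
  rewrite conts_S. apply NoDup_map_inj; [intros x y _ _ H; injection H; auto|].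
  assert (Hs : forall i' j', NoDup (sub k i' j')).
  { intros. unfold sub. destruct (inRb i' j'); auto. constructor; [intros []|constructor]. }
  apply NoDup_app; auto.
  intros q H1 H2. destruct (sub_hd _ _ _ _ H1) as [r1 ->]. destruct (sub_hd _ _ _ _ H2) as [r2 E].
  injection E; intros; lia.
Qed.

Lemma last_pred q : (2 <= length q)%nat -> steps q -> Forall S0 (removelast q) ->
  exists y, S0 y /\ step y (last q (0,0)%Z).
Proof.
  induction q as [|y q IH]; intros H1 H2 H3; [cbn in H1; lia|].
  destruct q as [|z r]; [cbn in H1; lia|].
  apply steps_cons in H2. destruct H2 as [Hs H2].
  simpl removelast in H3. apply Forall_cons_iff in H3. destruct H3 as [Hy H3].
  destruct r as [|w r'].
  - exists y; cbn; auto.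
  - destruct IH as [y' Hy']; auto. cbn; lia. exists y'. cbn [last] in *. auto.
Qed.

Lemma edges_inE q : steps q -> Forall S0 (removelast q) -> Forall (inE S0) (trace_edges q).
Proof.
  induction q as [|y q IH]; intros H2 H3; [constructor|].
  destruct q as [|z r]; [constructor|].
  apply steps_cons in H2. destruct H2 as [Hs H2].
  simpl removelast in H3. apply Forall_cons_iff in H3. destruct H3 as [Hy H3].
  cbn [trace_edges]. constructor; [apply eb_inE; auto|]. apply IH; auto.
Qed.

Hypothesis Hab : (a' <= b')%Z.
Hypothesis Hcd : (c' <= d')%Z.

Definition nN := Z.to_nat (NN + 1).
Definition nM := Z.to_nat (MM + 1).
Lemma nN_eq : Z.of_nat nN = (NN + 1)%Z.
Proof. unfold nN, NN. lia. Qed.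
Lemma nM_eq : Z.of_nat nM = (MM + 1)%Z.
Proof. unfold nM, MM. lia. Qed.

Definition srcs : list (point * (Z * Z)) :=
  map (fun j => (P (-1) j, (0%Z, j))) (zs nN) ++ map (fun i => (P i (-1), (i, 0%Z))) (zs nM).
Definition FF := (Z.to_nat (MM + NN) + 1)%nat.
Definition LC := flat_map (fun s => map (cons (fst s)) (conts FF (fst (snd s)) (snd (snd s)))) srcs.
Definition Llow := map (fun j => e_SW (P 0 j)) (zs nN) ++ map (fun i => e_SE (P i 0)) (zs nM).
Definition Lup := map (fun j => e_NE (P MM j)) (zs nN) ++ map (fun i => e_NW (P i NN)) (zs nM).

Lemma step_adj y z : step y z -> adjacent y z /\ adjacent z y.
Proof. unfold step, adjacent; intros; lia. Qed.

Lemma FF_enough i j : inR i j -> enough FF i j.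
Proof. unfold inR, enough, FF, MM, NN. lia. Qed.

Lemma src_facts s : In s srcs ->
  inR (fst (snd s)) (snd (snd s)) /\ step (fst s) (P (fst (snd s)) (snd (snd s))) /\ ~ S0 (fst s).
Proof.
  unfold srcs; rewrite in_app_iff, !in_map_iff.
  pose proof nN_eq; pose proof nM_eq.
  intros [[j [<- Hj]]|[i [<- Hi]]]; apply in_zs in Hj || apply in_zs in Hi; cbn [fst snd];
  (split; [unfold inR, MM, NN in *; lia|]); rewrite S_P; split;
  try (unfold step, P, tc, xc; cbn [fst snd]; lia); unfold inR; lia.
Qed.

Lemma src_complete i j y0 : inR i j -> step y0 (P i j) -> ~ S0 y0 -> In (y0, (i, j)) srcs.
Proof.
  intros HR Hs Hn. pose proof nN_eq; pose proof nM_eq.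
  unfold srcs; rewrite in_app_iff, !in_map_iff.
  destruct (step_bwd _ _ _ Hs) as [->| ->]; rewrite S_P in Hn.
  - assert (i = 0%Z) by (unfold inR in *; lia). subst i. left. exists j. split; auto.
    apply in_zs; unfold inR in *; lia.
  - assert (j = 0%Z) by (unfold inR in *; lia). subst j. right. exists i. split; auto.
    apply in_zs; unfold inR in *; lia.
Qed.

Lemma LC_iff l : In l LC <-> in_C S0 l.
Proof.
  unfold LC. rewrite in_flat_map. split.
  - intros [s [Hs Hl]]. apply in_map_iff in Hl. destruct Hl as [q [<- Hq]].
    destruct (src_facts s Hs) as (HR & Hst & Hn).
    destruct s as [y0 [i j]]; cbn [fst snd] in *.
    destruct (conts_hd _ _ _ _ Hq) as [r Er].
    destruct (conts_good _ _ _ _ HR Hq) as (G1&G2&G3&G4).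
    assert (Hy : S0 (P i j)) by (apply S_P; auto).
    subst q. destruct r as [|z r]; [cbn in G1; lia|].
    unfold in_C. split; [|split; [|split; [|split]]].
    + split; [cbn; lia|]. apply steps_cons. split; auto.
    + cbn [hd]. split; auto. right. exists (P i j). split; auto. apply step_adj; auto.
    + split; [|exact G4]. right.
      destruct (last_pred _ G1 G2 G3) as [y [Hy' Hs']]. exists y. split; auto.
      destruct (step_adj _ _ Hs') as [Ha _]; exact Ha.
    + exact G3.
    + change (trace_edges (y0 :: P i j :: z :: r)) with
        (edge_between y0 (P i j) :: trace_edges (P i j :: z :: r)).
      constructor; [apply eb_inE; auto|]. apply edges_inE; auto.
  - intros (HT & Hh & Hlast & HS & HE).
    destruct l as [|y0 [|y1 r]]; [destruct HT; cbn in *; lia|destruct HT; cbn in *; lia|].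
    destruct HT as [_ HT]. apply steps_cons in HT. destruct HT as [Hs01 HT].
    cbn [hd] in Hh. cbn [tl] in HS.
    destruct r as [|z r'].
    + exfalso. cbn [trace_edges] in HE. apply Forall_cons_iff in HE. destruct HE as [HE _].
      apply eb_inE_inv in HE; auto. cbn in Hlast. destruct Hh, Hlast. tauto.
    + simpl removelast in HS. pose proof HS as HS'. apply Forall_cons_iff in HS'.
      destruct HS' as [Hy1 _].
      destruct (S_inv _ Hy1) as [i [j [-> HR]]].
      exists (y0, (i, j)). split; [apply src_complete; auto; apply Hh|].
      apply in_map_iff. exists (P i j :: z :: r'). split; auto. cbn [fst snd].
      apply good_conts; auto; [apply FF_enough; auto| |eauto].
      split; [cbn; lia|]. split; auto. split; [exact HS|].
      apply Hlast.
Qed.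

Lemma LC_nodup : NoDup LC.
Proof.
  unfold LC. apply (nodup_flat_map fst (fun l => hd (0,0)%Z l)).
  - unfold srcs. rewrite map_app, !map_map. cbn [fst].
    apply NoDup_app.
    + apply NoDup_map_inj; [|apply zs_nodup]. intros x y _ _ H. apply P_inj in H; tauto.
    + apply NoDup_map_inj; [|apply zs_nodup]. intros x y _ _ H. apply P_inj in H; tauto.
    + intros p H1 H2. apply in_map_iff in H1, H2.
      destruct H1 as [j [<- Hj]], H2 as [i [E Hi]]. apply P_inj in E.
      apply in_zs in Hi. lia.
  - intros s _. apply NoDup_map_inj; [intros x y _ _ H; injection H; auto|apply conts_nodup].
  - intros s z _ Hz. apply in_map_iff in Hz. destruct Hz as [q [<- _]]. reflexivity.
Qed.

Lemma ptSW i j : (tc (P i j) - 1, xc (P i j) - 1)%Z = P (i-1) j.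
Proof. unfold P, tc, xc; cbn [fst snd]; peq. Qed.
Lemma ptSE i j : (tc (P i j) + 1, xc (P i j) - 1)%Z = P i (j-1).
Proof. unfold P, tc, xc; cbn [fst snd]; peq. Qed.
Lemma ptNW i j : (tc (P i j) - 1, xc (P i j) + 1)%Z = P i (j+1).
Proof. unfold P, tc, xc; cbn [fst snd]; peq. Qed.
Lemma ptNE i j : (tc (P i j) + 1, xc (P i j) + 1)%Z = P (i+1) j.
Proof. unfold P, tc, xc; cbn [fst snd]; peq. Qed.

Lemma bd_intro i j i' j' : inR i j -> ~ inR i' j' -> adjacent (P i j) (P i' j') -> inBd S0 (P i' j').
Proof.
  intros H1 H2 H3. split; [right; exists (P i j); split; auto; apply S_P; auto|].
  rewrite S_P; auto.
Qed.

Lemma low_iff e : In e Llow <-> E_low S0 e.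
Proof.
  pose proof nN_eq as HnN; pose proof nM_eq as HnM. unfold MM, NN in *.
  unfold Llow, E_low. rewrite in_app_iff, !in_map_iff. split.
  - intros [[j [<- Hj]]|[i [<- Hi]]]; [apply in_zs in Hj|apply in_zs in Hi].
    + exists (P 0 j). split; [apply S_P; unfold inR, MM, NN; lia|]. left. split; auto.
      rewrite ptSW. apply (bd_intro 0 j); unfold inR, MM, NN, adjacent, P, tc, xc; cbn [fst snd]; lia.
    + exists (P i 0). split; [apply S_P; unfold inR, MM, NN; lia|]. right. split; auto.
      rewrite ptSE. apply (bd_intro i 0); unfold inR, MM, NN, adjacent, P, tc, xc; cbn [fst snd]; lia.
  - intros [y [Hy H]]. destruct (S_inv _ Hy) as [i [j [-> HR]]].
    destruct H as [[-> Hb]|[-> Hb]].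
    + rewrite ptSW in Hb. destruct Hb as [_ Hb]. rewrite S_P in Hb.
      assert (i = 0%Z) by (unfold inR in *; lia). subst i. left. exists j; split; auto.
      apply in_zs; unfold inR, MM, NN in *; lia.
    + rewrite ptSE in Hb. destruct Hb as [_ Hb]. rewrite S_P in Hb.
      assert (j = 0%Z) by (unfold inR in *; lia). subst j. right. exists i; split; auto.
      apply in_zs; unfold inR, MM, NN in *; lia.
Qed.

Lemma up_iff e : In e Lup <-> E_up S0 e.
Proof.
  pose proof nN_eq as HnN; pose proof nM_eq as HnM. unfold MM, NN in *.
  unfold Lup, E_up. rewrite in_app_iff, !in_map_iff. split.
  - intros [[j [<- Hj]]|[i [<- Hi]]]; [apply in_zs in Hj|apply in_zs in Hi].
    + exists (P MM j). split; [apply S_P; unfold inR, MM, NN; lia|]. right. split; auto.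
      rewrite ptNE. apply (bd_intro MM j); unfold inR, MM, NN, adjacent, P, tc, xc; cbn [fst snd]; lia.
    + exists (P i NN). split; [apply S_P; unfold inR, MM, NN; lia|]. left. split; auto.
      rewrite ptNW. apply (bd_intro i NN); unfold inR, MM, NN, adjacent, P, tc, xc; cbn [fst snd]; lia.
  - intros [y [Hy H]]. destruct (S_inv _ Hy) as [i [j [-> HR]]].
    destruct H as [[-> Hb]|[-> Hb]].
    + rewrite ptNW in Hb. destruct Hb as [_ Hb]. rewrite S_P in Hb.
      assert (j = NN) by (unfold inR in *; lia). subst j. right. exists i; split; auto.
      apply in_zs; unfold inR, MM, NN in *; lia.
    + rewrite ptNE in Hb. destruct Hb as [_ Hb]. rewrite S_P in Hb.
      assert (i = MM) by (unfold inR in *; lia). subst i. left. exists j; split; auto.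
      apply in_zs; unfold inR, MM, NN in *; lia.
Qed.

Lemma low_nodup : NoDup Llow.
Proof.
  unfold Llow. apply NoDup_app.
  - apply NoDup_map_inj; [|apply zs_nodup]. intros x y _ _ H. injection H; lia.
  - apply NoDup_map_inj; [|apply zs_nodup]. intros x y _ _ H. injection H; lia.
  - intros e H1 H2. apply in_map_iff in H1, H2.
    destruct H1 as [j [<- _]], H2 as [i [E _]]. unfold e_SW, e_SE in E. congruence.
Qed.

Lemma up_nodup : NoDup Lup.
Proof.
  unfold Lup. apply NoDup_app.
  - apply NoDup_map_inj; [|apply zs_nodup]. intros x y _ _ H. injection H; lia.
  - apply NoDup_map_inj; [|apply zs_nodup]. intros x y _ _ H. injection H; lia.
  - intros e H1 H2. apply in_map_iff in H1, H2.
    destruct H1 as [j [<- _]], H2 as [i [E _]]. unfold e_NE, e_NW in E. congruence.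
Qed.

Lemma ab_bounds y z r f : 0 <= fst (ab (y :: z :: r) f) /\ snd (ab (y :: z :: r) f) <= eta f.
Proof.
  rewrite ab_cons. unfold stepab. destruct (Z.eqb _ _); destruct (ab _ _) as [x u]; cbn [fst snd];
  unfold Rmax, Rmin; repeat destruct Rle_dec; lra.
Qed.

Lemma src_sum s : In s srcs ->
  sum_list (w S0 eta) (map (cons (fst s)) (conts FF (fst (snd s)) (snd (snd s)))) =
  eta (edge_between (fst s) (P (fst (snd s)) (snd (snd s)))).
Proof.
  intros Hs. destruct (src_facts s Hs) as (HR & Hst & Hn).
  destruct s as [y0 [i j]]; cbn [fst snd] in *.
  set (f := edge_between y0 (P i j)).
  assert (Hl : lower f (P i j)) by (apply eb_lower; auto).
  assert (Hy : S0 (P i j)) by (apply S_P; auto).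
  assert (Hf0 : 0 <= eta f).
  { destruct (flow_at _ Hy) as (?&?&?&?&?). destruct Hl as [-> | ->]; auto. }
  rewrite sum_list_map.
  rewrite (sum_list_ext_in _ (fun q => len (Rmax 0 (fst (ab q f))) (Rmin (eta f) (snd (ab q f))))).
  - rewrite tree_sum; auto; [|apply FF_enough; auto].
    unfold len, Rmax, Rmin; repeat destruct Rle_dec; lra.
  - intros q Hq. destruct (conts_hd _ _ _ _ Hq) as [r ->].
    destruct (conts_good _ _ _ _ HR Hq) as (G1&G2&G3&G4).
    destruct r as [|z r]; [cbn in G1; lia|].
    unfold w. rewrite (interval_measure _ (fst (ab (P i j :: z :: r) f)) (snd (ab (P i j :: z :: r) f))).
    + destruct (ab_bounds (P i j) z r f) as [B1 B2].
      unfold len. rewrite (Rmax_right 0 (fst _)), (Rmin_right (eta f) (snd _)) by lra. reflexivity.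
    + intros p. unfold wset. fold f. apply CS; auto; [congruence|].
      intros y' z' r' E. injection E as <- _ _. exact Hl.
Qed.

Lemma sum_LC : sum_list (w S0 eta) LC = sum_list eta Llow.
Proof.
  unfold LC. rewrite sum_flat_map.
  rewrite (sum_list_ext_in _ (fun s => eta (edge_between (fst s) (P (fst (snd s)) (snd (snd s)))))).
  2:{ intros s Hs. apply src_sum; auto. }
  unfold srcs, Llow. rewrite !sum_list_app, !sum_list_map. cbn [fst snd].
  f_equal.
  - apply sum_list_ext_in. intros j _. rewrite <- (eb_SW 0 j). reflexivity.
  - apply sum_list_ext_in. intros i _. rewrite <- (eb_SE i 0). reflexivity.
Qed.

Lemma sum_low_up : sum_list eta Llow = sum_list eta Lup.
Proof.
  set (Hh := fun i j => eta (e_NE (P i j))).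
  set (Vv := fun i j => eta (e_NW (P i j))).
  assert (E1 : sum_list eta Llow = sum_list (fun j => Hh (-1)%Z j) (zs nN) + sum_list (fun i => Vv i (-1)%Z) (zs nM)).
  { unfold Llow. rewrite sum_list_app, !sum_list_map. f_equal.
    - apply sum_list_ext_in. intros j _. unfold Hh. rewrite SW_P. reflexivity.
    - apply sum_list_ext_in. intros i _. unfold Vv. rewrite SE_P. reflexivity. }
  assert (E2 : sum_list eta Lup = sum_list (fun j => Hh MM j) (zs nN) + sum_list (fun i => Vv i NN) (zs nM)).
  { unfold Lup. rewrite sum_list_app, !sum_list_map. reflexivity. }
  assert (Z0 : sum_list (fun i => sum_list (fun j => (Hh (i-1)%Z j - Hh i j) + (Vv i (j-1)%Z - Vv i j)) (zs nN)) (zs nM) = 0).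
  { rewrite (sum_list_ext_in _ (fun _ => 0)); [apply sum_list_zero|].
    intros i Hi. rewrite (sum_list_ext_in _ (fun _ => 0)); [apply sum_list_zero|].
    intros j Hj. apply in_zs in Hi, Hj. rewrite nN_eq in Hj; rewrite nM_eq in Hi.
    assert (Hy : S0 (P i j)) by (apply S_P; unfold inR; lia).
    destruct (flow_at _ Hy) as (?&?&?&?&Hc). rewrite SW_P, SE_P in Hc.
    unfold Hh, Vv. lra. }
  rewrite (sum_list_ext_in _ (fun i => sum_list (fun j => Hh (i-1)%Z j - Hh i j) (zs nN) +
       (Vv i (-1)%Z - Vv i NN))) in Z0.
  2:{ intros i _. rewrite sum_list_plus. f_equal.
      rewrite (telescope (fun j => Vv i j)), nN_eq. f_equal. f_equal. f_equal. lia. }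
  rewrite sum_list_plus, sum_list_minus in Z0.
  rewrite (sum_list_exch (fun i j => Hh (i - 1)%Z j - Hh i j)) in Z0.
  rewrite (sum_list_ext_in _ (fun j => Hh (-1)%Z j - Hh MM j)) in Z0.
  2:{ intros j _. rewrite (telescope (fun i => Hh i j)), nM_eq.
      replace (MM + 1 - 1)%Z with MM by lia. reflexivity. }
  rewrite (sum_list_minus (fun j => Hh (-1)%Z j)) in Z0. change (sum_list (Hh MM) (zs nN)) with (sum_list (fun j => Hh MM j) (zs nN)) in Z0. lra.
Qed.

Lemma main_grid : exists (Llow Lup : list edge) (LC : list (list point)),
    NoDup Llow /\ (forall e, In e Llow <-> E_low S0 e) /\
    NoDup Lup /\ (forall e, In e Lup <-> E_up S0 e) /\
    NoDup LC /\ (forall l, In l LC <-> in_C S0 l) /\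
    sum_list eta Llow = sum_list eta Lup /\
    sum_list eta Lup = sum_list (w S0 eta) LC.
Proof.
  exists Llow, Lup, LC. split; [apply low_nodup|]. split; [apply low_iff|].
  split; [apply up_nodup|]. split; [apply up_iff|]. split; [apply LC_nodup|].
  split; [apply LC_iff|]. split; [apply sum_low_up|].
  rewrite sum_LC, sum_low_up. reflexivity.
Qed.

End Grid.

Theorem mainTheorem10 (a b c d : Z) (eta : edge -> R) :
  Z.Even a -> Z.Even b -> Z.Even c -> Z.Even d -> (a <= b)%Z -> (c <= d)%Z ->
  flow_field (rect a b c d) eta ->
  exists (Llow Lup : list edge) (LC : list (list point)),
    NoDup Llow /\ (forall e, In e Llow <-> E_low (rect a b c d) e) /\
    NoDup Lup /\ (forall e, In e Lup <-> E_up (rect a b c d) e) /\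
    NoDup LC /\ (forall l, In l LC <-> in_C (rect a b c d) l) /\
    sum_list eta Llow = sum_list eta Lup /\
    sum_list eta Lup = sum_list (w (rect a b c d) eta) LC.
Proof.
  intros [a' ->] [b' ->] [c' ->] [d' ->] Hab Hcd Hfl.
  eapply main_grid; eauto; lia.
Qed.
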